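(* Let $F$ be a discrete time regulatory network on $[0,1]^d$ satisfying coordinatewise injectivity. Then for each $i\in\{1,\dots,d\}$ and each integer $t\ge1$, any two distinct members of $\mathcal Q_i^t$ are disjoint.
   Context: $K\in[0,1]^{d\times d}$ with $\sum_iK_{i,j}=1$ for each $j$; $s\in\{-1,0,1\}^{d\times d}$, $T\in[0,1]^{d\times d}$ with $s_{i,j}=0$ iff $K_{i,j}=0$ and $T_{i,j}=0$ iff $K_{i,j}=0$; $a\in[0,1]$; $H(x)=0$ for $x\le0$, $1$ otherwise; $F(x)_j=ax_j+(1-a)\sum_iK_{i,j}H(s_{i,j}(x_i-T_{i,j}))$. Coordinatewise injectivity: for each $j$, with $\mathcal F_j=\{x\mapsto ax+(1-a)\sum_i\epsilon_iK_{i,j}:\epsilon\in\{0,1\}^d\}$, distinct $f,f'\in\mathcal F_j$ have $f([0,1])\cap f'([0,1])=\emptyset$. Base partition: $\mathcal P_i$ is the set of nonempty level sets of $u\mapsto(H(s_{i,k}(u-T_{i,k})))_{k=1}^d$ on $[0,1]$, $\mathcal P=\{\prod_iI_i:I_i\in\mathcal P_i\}$; $\mathcal P^1=\mathcal P$, $\mathcal P^{t+1}=\{F^{-1}(\mathbf I)\cap\mathbf J\ne\emptyset:\mathbf I\in\mathcal P^t,\mathbf J\in\mathcal P\}$. Set $\mathcal Q^t=\{F^{t-1}(\mathbf I):\mathbf I\in\mathcal P^t\}$ and $\mathcal Q_i^t=\{\Pi_i\mathbf J:\mathbf J\in\mathcal Q^t\}$, where $\Pi_i$ is the projection onto the $i$-th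 coordinate. *)

(* Defs.v *)
From HB Require Import structures.
From mathcomp Require Import all_boot all_order all_algebra.
From mathcomp Require Import all_classical all_reals.
Set Implicit Arguments. Unset Strict Implicit. Unset Printing Implicit Defensive.
Import Order.TTheory GRing.Theory Num.Theory.
Local Open Scope ring_scope.
Local Open Scope classical_set_scope.

Section RegNet.
Variables (R : realType) (d : nat).
Notation vec := ('I_d -> R).

Definition Heav (x : R) : R := if x <= 0 then 0 else 1.

Definition unitI : set R := [set u | 0 <= u <= 1].
Definition cube : set vec := [set x | forall i, unitI (x i)].

Definition regnet_data (K : 'I_d -> 'I_d -> R) (s : 'I_d -> 'I_d -> int)
  (T : 'I_d -> 'I_d -> R) (a : R) : Prop :=
  (forall i j, unitI (K i j)) /\
  (forall j, \sum_(i < d) K i j = 1) /\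
  (forall i j, s i j = -1 \/ s i j = 0 \/ s i j = 1) /\
  (forall i j, s i j = 0 <-> K i j = 0) /\
  (forall i j, unitI (T i j)) /\
  (forall i j, T i j = 0 <-> K i j = 0) /\
  unitI a.

Definition netF (K : 'I_d -> 'I_d -> R) (s : 'I_d -> 'I_d -> int)
  (T : 'I_d -> 'I_d -> R) (a : R) (x : vec) : vec :=
  fun j => a * x j + (1 - a) *
    \sum_(i < d) K i j * Heav ((s i j)%:~R * (x i - T i j)).

Definition coord_injective (K : 'I_d -> 'I_d -> R) (a : R) : Prop :=
  forall (j : 'I_d) (eps eps' : 'I_d -> bool),
    let f := fun x : R => a * x + (1 - a) * \sum_(i < d) (eps i)%:R * K i j in
    let f' := fun x : R => a * x + (1 - a) * \sum_(i < d) (eps' i)%:R * K i j in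
    f <> f' -> f @` unitI `&` f' @` unitI = set0.

(* base partition of coordinate i: nonempty level sets on [0,1] of
   u |-> (H(s_{i,k}(u - T_{i,k})))_k *)
Definition sigvec (s : 'I_d -> 'I_d -> int) (T : 'I_d -> 'I_d -> R)
  (i : 'I_d) (u : R) : 'I_d -> R :=
  fun k => Heav ((s i k)%:~R * (u - T i k)).

Definition basePi (s : 'I_d -> 'I_d -> int) (T : 'I_d -> 'I_d -> R)
  (i : 'I_d) : set (set R) :=
  [set I | exists2 u0, unitI u0 &
     I = [set u | unitI u /\ sigvec s T i u = sigvec s T i u0]].

Definition baseP (s : 'I_d -> 'I_d -> int) (T : 'I_d -> 'I_d -> R)
  : set (set vec) :=
  [set B | exists I : 'I_d -> set R,
     (forall i, basePi s T i (I i)) /\ B = [set x | forall i, I i (x i)]].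

(* P^{n+1}, n >= 0 *)
Fixpoint Pdeep (K : 'I_d -> 'I_d -> R) (s : 'I_d -> 'I_d -> int)
  (T : 'I_d -> 'I_d -> R) (a : R) (n : nat) : set (set vec) :=
  match n with
  | 0 => baseP s T
  | n'.+1 => [set C | exists I, exists J,
       [/\ Pdeep K s T a n' I, baseP s T J,
           C = (netF K s T a) @^-1` I `&` J & C !=set0]]
  end.

Definition Ppart K s T a (t : nat) : set (set vec) := Pdeep K s T a t.-1.

Definition Qpart K s T a (t : nat) : set (set vec) :=
  [set J | exists2 I, Ppart K s T a t I & J = iter t.-1 (netF K s T a) @` I].

Definition Qpart_i K s T a (t : nat) (i : 'I_d) : set (set R) :=
  [set A | exists2 J, Qpart K s T a t J & A = (fun x : vec => x i) @` J].

End RegNet.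

(* Main.v *)
Require Import Defs.
From HB Require Import structures.
From mathcomp Require Import all_boot all_order all_algebra.
From mathcomp Require Import all_classical all_reals.
Import Order.TTheory GRing.Theory Num.Theory.
Local Open Scope ring_scope.
Local Open Scope classical_set_scope.
Set Implicit Arguments. Unset Strict Implicit. Unset Printing Implicit Defensive.

Definition relc (R : realType) (d : nat) (s : 'I_d -> 'I_d -> int)
  (T : 'I_d -> 'I_d -> R) (z w : 'I_d -> R) : Prop :=
  forall j, unitI (z j) /\ unitI (w j) /\ sigvec s T j (z j) = sigvec s T j (w j).

Lemma relc_sym (R : realType) d s (T : 'I_d -> 'I_d -> R) z w :
  relc s T z w -> relc s T w z.
Proof. by move=> H j; case: (H j) => h1 [h2 h3]; split => //; split. Qed.

Lemma relc_trans (R : realType) d s (T : 'I_d -> 'I_d -> R) z u w :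
  relc s T z u -> relc s T u w -> relc s T z w.
Proof.
move=> H1 H2 j; case: (H1 j) => h1 [h2 h3]; case: (H2 j) => g1 [g2 g3].
by split => //; split => //; rewrite h3.
Qed.

Lemma baseP_char (R : realType) d (s : 'I_d -> 'I_d -> int) (T : 'I_d -> 'I_d -> R)
  (J : set ('I_d -> R)) :
  baseP s T J -> exists2 x0, J x0 & forall x, J x <-> relc s T x0 x.
Proof.
case=> I [HI ->].
have [u0 Hu0] : {u0 : 'I_d -> R & forall i, unitI (u0 i) /\
   I i = [set u | unitI u /\ sigvec s T i u = sigvec s T i (u0 i)]}.
  apply: (@choice _ _ (fun i u0 => unitI u0 /\
   I i = [set u | unitI u /\ sigvec s T i u = sigvec s T i u0])).
  by move=> i; case: (HI i) => u0 h1 h2; exists u0.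
exists u0 => [i|x].
  by rewrite (proj2 (Hu0 i)); split => //; exact (proj1 (Hu0 i)).
split => [Hx j | Hx j].
- move: (Hx j); rewrite (proj2 (Hu0 j)) => -[h1 h2].
  by split; [exact (proj1 (Hu0 j))| split].
- rewrite (proj2 (Hu0 j)); case: (Hx j) => _ [h1 h2]; by split.
Qed.

Lemma Pdeep_char (R : realType) d K s (T : 'I_d -> 'I_d -> R) a n C :
  Pdeep K s T a n C -> exists2 x0, C x0 & forall x, C x <->
    forall k, (k <= n)%N -> relc s T (iter k (netF K s T a) x0) (iter k (netF K s T a) x).
Proof.
elim: n C => [|n IH] C /=.
  move=> /baseP_char [x0 Cx0 H]; exists x0 => // x; rewrite H; split.
    by move=> h [|k].
  by move=> h; exact: (h 0%N).
case=> I [J [/IH [y0 Iy0 HI] /baseP_char [z0 Jz0 HJ] -> [x0 [Ix0 Jx0]]]].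
have := Ix0; rewrite /preimage /= => /HI Hx0.
have := Jx0 => /HJ Hz.
exists x0; first by split.
move=> x; split.
- case; rewrite /preimage /= => /HI Hx /HJ Hzx [|k] Hk.
    by apply: relc_trans (relc_sym Hz) Hzx.
  rewrite !iterSr; apply: relc_trans (relc_sym (Hx0 k Hk)) (Hx k Hk).
- move=> H; split.
    rewrite /preimage /=; apply/HI => k Hk.
    have := H k.+1 Hk; rewrite !iterSr => H2.
    exact: relc_trans (Hx0 k Hk) H2.
  by apply/HJ; apply: relc_trans Hz (H 0%N isT).
Qed.

Definition Sterm (R : realType) d (K : 'I_d -> 'I_d -> R) (s : 'I_d -> 'I_d -> int)
  (T : 'I_d -> 'I_d -> R) (v : 'I_d -> R) (j : 'I_d) : R :=
  \sum_(k < d) K k j * Heav ((s k j)%:~R * (v k - T k j)).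

Lemma netFE (R : realType) d K s (T : 'I_d -> 'I_d -> R) a x j :
  netF K s T a x j = a * x j + (1 - a) * Sterm K s T x j.
Proof. by []. Qed.

Lemma Sterm_relc (R : realType) d K s (T : 'I_d -> 'I_d -> R) z w j :
  relc s T z w -> Sterm K s T z j = Sterm K s T w j.
Proof.
move=> H; apply: eq_bigr => k _; case: (H k) => _ [_ e].
by have := congr1 (fun f => f j) e; rewrite /sigvec => ->.
Qed.

Lemma Sterm_eps (R : realType) d K s (T : 'I_d -> 'I_d -> R) v j :
  Sterm K s T v j = \sum_(k < d)
    (~~ ((s k j)%:~R * (v k - T k j) <= 0))%:R * K k j.
Proof.
apply: eq_bigr => k _; rewrite mulrC /Heav.
by case: (_ <= 0) => /=; rewrite ?mulr0n ?mulr1n.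
Qed.

Lemma ci_eq (R : realType) d K s (T : 'I_d -> 'I_d -> R) a :
  coord_injective K a -> forall j z w u v, unitI u -> unitI v ->
  a * u + (1 - a) * Sterm K s T z j = a * v + (1 - a) * Sterm K s T w j ->
  (1 - a) * Sterm K s T z j = (1 - a) * Sterm K s T w j.
Proof.
move=> Hci j z w u v Hu Hv; rewrite !Sterm_eps => E.
set e1 := fun k : 'I_d => ~~ ((s k j)%:~R * (z k - T k j) <= 0).
set e2 := fun k : 'I_d => ~~ ((s k j)%:~R * (w k - T k j) <= 0).
have H := Hci j e1 e2; cbv zeta in H.
case: (pselect ((fun x : R => a * x + (1 - a) * \sum_(i < d) (e1 i)%:R * K i j) =
   (fun x : R => a * x + (1 - a) * \sum_(i < d) (e2 i)%:R * K i j))) => [e|ne].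
  by have := congr1 (fun g => g 0) e; rewrite /= !mulr0 !add0r.
have := H ne => H0.
move/seteqP: H0 => [H0 _].
have F0 := H0 (a * u + (1 - a) * \sum_(i < d) (e1 i)%:R * K i j).
exfalso; apply: F0.
split; first by exists u.
by exists v => //; rewrite E.
Qed.

Lemma key (R : realType) d K s (T : 'I_d -> 'I_d -> R) a (i : 'I_d) n C C' y y' x :
  coord_injective K a ->
  Pdeep K s T a n C -> Pdeep K s T a n C' -> C y -> C' y' -> C x ->
  iter n (netF K s T a) y i = iter n (netF K s T a) y' i ->
  exists2 x', C' x' & iter n (netF K s T a) x' i = iter n (netF K s T a) x i.
Proof.
move=> Hci /Pdeep_char [x0 Cx0 HC] /Pdeep_char [y0 Cy0 HC'] Cy Cy' Cx Ez.
set F := netF K s T a in HC HC' Ez *.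
have rxy : forall k, (k <= n)%N -> relc s T (iter k F x) (iter k F y).
  by move=> k Hk; apply: relc_trans (relc_sym ((HC x).1 Cx k Hk)) ((HC y).1 Cy k Hk).
have ry' : forall k, (k <= n)%N -> relc s T (iter k F y0) (iter k F y').
  by move=> k Hk; exact: ((HC' y').1 Cy' k Hk).
case: (boolP ((a == 0) && (0 < n)%N)) => [/andP [/eqP a0 n0] | Hna].
  exists y' => //; rewrite -Ez.
  have [m nE] : exists m, n = m.+1 by exists n.-1; rewrite prednK.
  have Hm : (m <= n)%N by rewrite nE.
  rewrite nE !iterS /F !netFE (@Sterm_relc _ _ K s T _ _ i (rxy m Hm)).
  by rewrite /F a0 !mul0r !add0r.
have peel : forall k, (k <= n)%N -> iter k F y i = iter k F y' i.
  suff H : forall m, (m <= n)%N -> iter (n - m) F y i = iter (n - m) F y' i.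
    by move=> k Hk; have := H (n - k)%N (leq_subr k n); rewrite subKn.
  elim=> [|m IHm] Hm; first by rewrite subn0.
  have Hm' : (m <= n)%N := ltnW Hm.
  have := IHm Hm'.
  have nm : (n - m = (n - m.+1).+1)%N by rewrite subnS prednK // subn_gt0.
  have Hk : (n - m.+1 <= n)%N := leq_subr _ _.
  rewrite nm !iterS /F !netFE => E.
  have Es := ci_eq Hci ((rxy _ Hk i).2.1) ((ry' _ Hk i).2.1) E.
  move: E; rewrite Es => /addIr E.
  have an0 : a != 0.
    apply: contraNneq Hna => ->; rewrite eqxx /=.
    exact: leq_ltn_trans (leq0n m) Hm.
  by apply: (mulfI an0).
have peelS : forall k, (k < n)%N ->
    (1 - a) * Sterm K s T (iter k F y) i = (1 - a) * Sterm K s T (iter k F y') i.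
  move=> k Hk; have := peel k.+1 Hk; rewrite !iterS /F !netFE (peel k (ltnW Hk)).
  by move/addrI.
pose x' := fun j => if j == i then x j else y' j.
have relk : forall k, (k <= n)%N ->
    (forall j, iter k F x' j = if j == i then iter k F x j else iter k F y' j) ->
    relc s T (iter k F y') (iter k F x').
  move=> k Hk inv j; rewrite (inv j); case: eqP => [->|_].
    case: (rxy k Hk i) => ux [uy sxy]; case: (ry' k Hk i) => _ [uy' _].
    by split => //; split => //; rewrite -(peel k Hk) sxy.
  by case: (ry' k Hk j) => _ [u _]; do !split.
have inv : forall k, (k <= n)%N ->
    forall j, iter k F x' j = if j == i then iter k F x j else iter k F y' j.
  elim=> [|k IHk] Hk j; first by [].
  have Hk' := ltnW Hk.
  have Rk := relk k Hk' (IHk Hk').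
  rewrite !iterS /F !netFE (IHk Hk' j) -(@Sterm_relc _ _ K s T _ _ j Rk).
  case: eqP => [->|_] //.
  by rewrite -(peelS k Hk) (@Sterm_relc _ _ K s T _ _ i (rxy k Hk')).
exists x'.
  by apply/(HC' x').2 => k Hk; apply: relc_trans (ry' k Hk) (relk k Hk (inv k Hk)).
by rewrite (inv n (leqnn n) i) eqxx.
Qed.

Theorem mainTheorem6 (R : realType) (d : nat)
  (K : 'I_d -> 'I_d -> R) (s : 'I_d -> 'I_d -> int)
  (T : 'I_d -> 'I_d -> R) (a : R) :
  regnet_data K s T a ->
  coord_injective K a ->
  forall (i : 'I_d) (t : nat), (1 <= t)%N ->
  forall A B : set R,
    Qpart_i K s T a t i A -> Qpart_i K s T a t i B ->
    A <> B -> A `&` B = set0.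
Proof.
move=> _ Hci i t _ A B [J [I HI ->] ->] [J' [I' HI' ->] ->] nAB.
rewrite -subset0 => z [[v [y Iy <-] Ez] [v' [y' Iy' <-] Ez']].
apply: nAB; apply/seteqP; split.
- move=> w [v1 [x Ix <-] <-].
  have [x' Cx' E] := key Hci HI HI' Iy Iy' Ix (etrans Ez (esym Ez')).
  by exists (iter t.-1 (netF K s T a) x') => //; exists x'.
- move=> w [v1 [x Ix <-] <-].
  have [x' Cx' E] := key Hci HI' HI Iy' Iy Ix (etrans Ez' (esym Ez)).
  by exists (iter t.-1 (netF K s T a) x') => //; exists x'.
Qed.
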